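(* Let $n$ be a positive integer and $p,q$ primes such that $\binom{n}{k}$ is divisible by $p$ or $q$ for every integer $1\le k\le n-1$. Then for every integer $m\le n$, the multinomial coefficient $\binom{n}{k_1,\dots,k_m}=\frac{n!}{k_1!\cdots k_m!}$ is divisible by $p$ or $q$ whenever $k_1+\cdots+k_m=n$ with $1\le k_i\le n-1$ for all $i$. *)

(* Defs.v *)
From mathcomp Require Import all_boot.
Set Implicit Arguments. Unset Strict Implicit. Unset Printing Implicit Defensive.

(* Multinomial coefficient n! / (k_1! ... k_m!) for a composition k of n
   indexed by 'I_m (exact division when \sum k_i = n). *)
Definition multinomial (n m : nat) (k : 'I_m -> nat) : nat :=
  n`! %/ \prod_(i < m) (k i)`!.

(* Main.v *)
Require Import Defs.
From mathcomp Require Import all_boot.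

Lemma prod_fact_dvd (m : nat) (k : 'I_m -> nat) :
  \prod_(i < m) (k i)`! %| (\sum_(i < m) k i)`!.
Proof.
elim: m k => [|m IH] k; first by rewrite !big_ord0.
rewrite !big_ord_recl.
set a := k ord0; set r := \sum_(i < m) k (lift ord0 i).
apply: (dvdn_trans (dvdn_mul (dvdnn a`!) (IH (fun i => k (lift ord0 i))))).
rewrite -/r -(bin_fact (leq_addr r a)) addKn.
exact: dvdn_mull.
Qed.

Theorem mainTheorem17 (n p q : nat) (hn : 0 < n) (hp : prime p) (hq : prime q)
  (hbin : forall k, 1 <= k <= n - 1 -> (p %| 'C(n, k)) || (q %| 'C(n, k)))
  (m : nat) (hm : m <= n) (k : 'I_m -> nat)
  (hsum : \sum_(i < m) k i = n)
  (hk : forall i, 1 <= k i <= n - 1) :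
  (p %| multinomial n k) || (q %| multinomial n k).
Proof.
case: m hm k hsum hk => [|m] hm k hsum hk.
  by move: hsum; rewrite big_ord0 => H; rewrite -H in hn.
have hdiv := @prod_fact_dvd m (fun i => k (lift ord0 i)).
move: hsum; rewrite big_ord_recl => hsum.
set a := k ord0 in hsum hdiv *.
set r := \sum_(i < m) k (lift ord0 i) in hsum hdiv.
have ha := hk ord0; rewrite -/a in ha.
have har : r = n - a by rewrite -hsum addKn.
case/dvdnP: hdiv => Q HQ.
have Hm : multinomial n k = 'C(n, a) * Q.
  rewrite /multinomial big_ord_recl -/a.
  have hle : a <= n by rewrite -hsum leq_addr.
  rewrite -(bin_fact hle) -har HQ.
  set P := \prod_(i < m) _.
  have -> : 'C(n, a) * (a`! * (Q * P)) = ('C(n, a) * Q) * (a`! * P).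
    by rewrite !mulnA; congr (_ * _); rewrite mulnAC.
  rewrite mulnK // muln_gt0 fact_gt0 prodn_gt0 // => i; exact: fact_gt0.
rewrite Hm.
by case/orP: (hbin a ha) => H; apply/orP; [left|right]; apply: dvdn_mulr.
Qed.
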